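(* Let $N\ge 2$. There exists a lower triangular matrix $H\in\mathbb{R}^{(N-1)\times(N-1)}$ with entries $h_{k,j}$ such that for every $d\ge 1$, every nonexpansive $\mathbb{T}\colon\mathbb{R}^d\to\mathbb{R}^d$ and every $y_0\in\mathbb{R}^d$: (i) the iterates of the Optimal Halpern Method $y_{k+1}=\frac{k+1}{k+2}\mathbb{T}y_k+\frac{1}{k+2}y_0$, $k=0,\dots,N-2$, satisfy $y_{k+1}=y_k-\sum_{j=0}^k h_{k+1,j+1}(y_j-\mathbb{T}y_j)$ for $k=0,\dots,N-2$; and (ii) the iterates of the Dual Optimal Halpern Method $y_{k+1}=y_k+\frac{N-k-1}{N-k}(\mathbb{T}y_k-\mathbb{T}y_{k-1})$, $k=0,\dots,N-2$ (with $\mathbb{T}y_{-1}:=y_0$), satisfy $y_{k+1}=y_k-\sum_{j=0}^k (H^{A})_{k+1,j+1}(y_j-\mathbb{T}y_j)$ for $k=0,\dots,N-2$, where $H^{A}$ denotes the anti-diagonal transpose $(H^A)_{k,j}=H_{N-j,N-k}$. That is, the two methods are H-duals of each other.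
   Context: Nonexpansive means $1$-Lipschitz. Indices of $(N-1)\times(N-1)$ matrices run over $1,\dots,N-1$. *)

(* Defs.v *)
From mathcomp Require Import all_boot all_order all_algebra.
From mathcomp Require Import reals.
Set Implicit Arguments. Unset Strict Implicit. Unset Printing Implicit Defensive.
Import Order.TTheory GRing.Theory Num.Theory.
Local Open Scope ring_scope.

Definition enorm (R : realType) (d : nat) (x : 'rV[R]_d) : R :=
  Num.sqrt (\sum_(i < d) x 0 i ^+ 2).

Definition nonexpansive (R : realType) (d : nat) (T : 'rV[R]_d -> 'rV[R]_d) : Prop :=
  forall x y : 'rV[R]_d, enorm (T x - T y) <= enorm (x - y).

Fixpoint ohm (R : realType) (d : nat) (T : 'rV[R]_d -> 'rV[R]_d) (y0 : 'rV[R]_d)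
    (k : nat) : 'rV[R]_d :=
  match k with
  | 0 => y0
  | k'.+1 => (k'.+1%:R / k'.+2%:R) *: T (ohm T y0 k') + (1 / k'.+2%:R) *: y0
  end.

(* Dual Optimal Halpern Method, auxiliary: returns (y_k, T y_{k-1}) with T y_{-1} := y0. *)
Fixpoint dohm_aux (R : realType) (d : nat) (N : nat) (T : 'rV[R]_d -> 'rV[R]_d)
    (y0 : 'rV[R]_d) (k : nat) : 'rV[R]_d * 'rV[R]_d :=
  match k with
  | 0 => (y0, y0)
  | k'.+1 =>
      let yk := (dohm_aux N T y0 k').1 in
      let Tprev := (dohm_aux N T y0 k').2 in
      (yk + ((N - k' - 1)%:R / (N - k')%:R) *: (T yk - Tprev), T yk)
  end.

Definition dohm (R : realType) (d : nat) (N : nat) (T : 'rV[R]_d -> 'rV[R]_d)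
    (y0 : 'rV[R]_d) (k : nat) : 'rV[R]_d := (dohm_aux N T y0 k).1.

(* Main.v *)
Require Import Defs.
From mathcomp Require Import all_boot all_order all_algebra.
From mathcomp Require Import reals ring lra zify.
Import Order.TTheory GRing.Theory Num.Theory.
Local Open Scope ring_scope.

Ltac nzside := rewrite ?andbT; repeat (apply/andP; split); try (apply/eqP => ?; lra).

Lemma ohm_closed (R : realType) d (T : 'rV[R]_d -> 'rV[R]_d) y0 k (i : 'I_d) :
  ohm T y0 k 0 i = y0 0 i - k.+1%:R^-1 *
    \sum_(j < k) (j.+1%:R * (ohm T y0 j 0 i - T (ohm T y0 j) 0 i)).
Proof.
elim: k => [|k IH]; first by rewrite big_ord0 mulr0 subr0.
rewrite [ohm _ _ k.+1]/= !mxE big_ord_recr /= IH.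
set S := \sum_(j < k) _.
have hk : (0 : R) <= k%:R by rewrite ler0n.
field; nzside.
Qed.

Definition hh (R : realType) (k j : nat) : R :=
  if (j < k)%N then - (j.+1%:R / (k.+1%:R * k.+2%:R))
  else if j == k then k.+1%:R / k.+2%:R else 0.

Lemma ohm_step (R : realType) d (T : 'rV[R]_d -> 'rV[R]_d) y0 k (i : 'I_d) :
  ohm T y0 k.+1 0 i = ohm T y0 k 0 i - \sum_(j < k.+1)
     hh R k j * (ohm T y0 j 0 i - T (ohm T y0 j) 0 i).
Proof.
rewrite (@ohm_closed _ _ T y0 k.+1) (@ohm_closed _ _ T y0 k) !big_ord_recr /=.
rewrite /hh ltnn eqxx.
set S := \sum_(j < k) _.
rewrite [X in _ - (X + _) ](_ : _ = - (k.+1%:R * k.+2%:R)^-1 * S); last first.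
  rewrite /S mulr_sumr; apply: eq_bigr => j _ /=.
  rewrite ifT; last exact: ltn_ord.
  ring.
have hk : (0 : R) <= k%:R by rewrite ler0n.
field; nzside.
Qed.
Lemma natS1 (R : realType) a b : (b <= a)%N -> ((a - b).+1%:R : R) = a.+1%:R - b%:R.
Proof. by move=> h; rewrite -subSn // natrB // leqW. Qed.
Lemma natS2 (R : realType) a b : (b <= a)%N -> ((a - b).+2%:R : R) = a.+2%:R - b%:R.
Proof. by move=> h; rewrite -!subSn // ?leqW // natrB // !leqW. Qed.

Lemma dohm_closed (R : realType) d n (T : 'rV[R]_d -> 'rV[R]_d) y0 k (i : 'I_d) :
  (k <= n)%N ->
  (dohm_aux n.+2 T y0 k).1 0 i - (dohm_aux n.+2 T y0 k).2 0 i =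
  (n.+2%:R - k%:R) * \sum_(j < k) (dohm n.+2 T y0 j 0 i - T (dohm n.+2 T y0 j) 0 i)
       / ((n.+1%:R - j%:R) * (n.+2%:R - j%:R)).
Proof.
elim: k => [|k IH] hk; first by rewrite big_ord0 mulr0 subrr.
have hk' : (k <= n)%N by apply: ltnW.
move: (IH hk') => {IH}.
rewrite /dohm big_ord_recr /=.
set y := (dohm_aux n.+2 T y0 k).1.
set p := (dohm_aux n.+2 T y0 k).2.
set S := \sum_(j < k) _.
move=> E.
have Ep : p 0 i = y 0 i - (n.+2%:R - k%:R) * S by rewrite -E; ring.
rewrite !mxE Ep.
have -> : (n.+2 - k - 1 = (n.+1 - k))%N by lia.
rewrite !natrB; [|lia|lia].
have hkr : (k%:R : R) <= n%:R by rewrite ler_nat.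
have hkr1 : (k.+1%:R : R) <= n%:R by rewrite ler_nat.
have h0 : (0 : R) <= k%:R by rewrite ler0n.
field; nzside.
Qed.

Lemma dohm_step (R : realType) d n (T : 'rV[R]_d -> 'rV[R]_d) y0 k (i : 'I_d) :
  (k <= n)%N ->
  dohm n.+2 T y0 k.+1 0 i = dohm n.+2 T y0 k 0 i - \sum_(j < k.+1)
     hh R (n - j) (n - k) * (dohm n.+2 T y0 j 0 i - T (dohm n.+2 T y0 j) 0 i).
Proof.
move=> hk.
have E := @dohm_closed R d n T y0 k i hk.
rewrite big_ord_recr /= /hh ltnn eqxx.
rewrite [X in _ - (X + _) ](_ : _ = - (n.+1%:R - k%:R) *
   \sum_(j < k) (dohm n.+2 T y0 j 0 i - T (dohm n.+2 T y0 j) 0 i)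
       / ((n.+1%:R - j%:R) * (n.+2%:R - j%:R))); last first.
  rewrite mulr_sumr; apply: eq_bigr => j _ /=.
  have hj : (j < k)%N := ltn_ord j.
  rewrite ifT; last by lia.
  rewrite !natS1 ?natS2; [|lia|lia|lia].
  have hkr : (k%:R : R) <= n%:R by rewrite ler_nat.
  have hjr : (j.+1%:R : R) <= k%:R by rewrite ler_nat.
  have h0 : (0 : R) <= j%:R by rewrite ler0n.
  field; nzside.
move: E; rewrite /dohm /=.
set y := (dohm_aux n.+2 T y0 k).1.
set p := (dohm_aux n.+2 T y0 k).2.
set S := \sum_(j < k) _.
move=> E.
have Ep : p 0 i = y 0 i - (n.+2%:R - k%:R) * S by rewrite -E; ring.
rewrite !mxE Ep.
have -> : (n.+2 - k - 1 = (n.+1 - k))%N by lia.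
rewrite !natrB; [|lia|lia].
rewrite natS1 ?natS2 //.
have hkr : (k%:R : R) <= n%:R by rewrite ler_nat.
have h0 : (0 : R) <= k%:R by rewrite ler0n.
field; nzside.
Qed.

Theorem proposition5p1 (R : realType) (N : nat) (hN : (2 <= N)%N) :
  exists H : 'M[R]_(N - 1),
    (forall i j : 'I_(N - 1), (i < j)%N -> H i j = 0) /\
    forall (d : nat), (1 <= d)%N ->
    forall (T : 'rV[R]_d -> 'rV[R]_d), nonexpansive T ->
    forall y0 : 'rV[R]_d,
      (forall k : 'I_(N - 1),
         ohm T y0 k.+1 =
           ohm T y0 k -
           \sum_(j < N - 1 | (j <= k)%N)
              H k j *: (ohm T y0 j - T (ohm T y0 j))) /\
      (forall k : 'I_(N - 1),
         dohm N T y0 k.+1 =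
           dohm N T y0 k -
           \sum_(j < N - 1 | (j <= k)%N)
              H (rev_ord j) (rev_ord k) *: (dohm N T y0 j - T (dohm N T y0 j))).
Proof.
case: N hN => [|[|n]] // _.
exists (\matrix_(i, j) hh R i j); split.
  by move=> i j hij; rewrite mxE /hh ltnNge (ltnW hij) /= gtn_eqF.
move=> d _ T _ y0; split => k; apply/rowP => i.
  rewrite (@ohm_step R d T y0 k i) !mxE summxE; symmetry.
  under eq_bigr => j _ do rewrite !mxE.
  by rewrite (big_ord_widen (n.+2 - 1)
     (fun j => hh R k j * (ohm T y0 j 0 i - T (ohm T y0 j) 0 i)) (ltn_ord k)).
have rv : forall m : 'I_(n.+2 - 1), (rev_ord m : nat) = (n - m)%N
  by move=> m /=; lia.
have hk : (k <= n)%N by have := ltn_ord k; lia.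
rewrite (@dohm_step R d n T y0 k i hk) !mxE summxE; symmetry.
under eq_bigr => j _ do rewrite !mxE !rv.
by rewrite (big_ord_widen (n.+2 - 1)
     (fun j => hh R (n - j) (n - k) * (dohm n.+2 T y0 j 0 i - T (dohm n.+2 T y0 j) 0 i)) (ltn_ord k)).
Qed.
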